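(* Let $N\ge 3$ and $0<\gamma_1\le\dots\le\gamma_N$. There exists a sum-rate optimal spanning tree $T$ on $\{1,\dots,N\}$ in which vertices $N$ and $N-1$ both have degree $1$ and, writing $i$ for the unique neighbor of $N$ and $j$ for the unique neighbor of $N-1$, one has $\gamma_i\ge\gamma_j$.
   Context: For distinct $i,j$ put $\varphi(i,j)=\log_2\!\big(\gamma_i+\frac{\gamma_i}{\gamma_i+\gamma_j}\big)$. For a spanning tree $T$ on $\{1,\dots,N\}$ with neighbor sets $A_i^T$, define $R_{\mathrm s}(T)=\frac{1}{2(N-1)}\sum_{i=1}^N \min_{j\in A_i^T}\varphi(i,j)$. A spanning tree is called sum-rate optimal if it maximizes $R_{\mathrm s}$ over all spanning trees on $\{1,\dots,N\}$. *)

(* Defs.v *)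
From Stdlib Require Import Reals Lra Lia List Arith Relations.
Import ListNotations.
Open Scope R_scope.

Definition log2 (x : R) : R := ln x / ln 2.

Definition phi (gamma : nat -> R) (i j : nat) : R :=
  log2 (gamma i + gamma i / (gamma i + gamma j)).

(* A graph on the vertex set {1,...,N} is given by a boolean adjacency relation
   E : nat -> nat -> bool (simple, undirected, supported on {1..N}). *)
Definition in_range (N v : nat) : Prop := (1 <= v <= N)%nat.

Definition simple_graph_on (N : nat) (E : nat -> nat -> bool) : Prop :=
  (forall u v, E u v = E v u) /\
  (forall u, E u u = false) /\
  (forall u v, E u v = true -> in_range N u /\ in_range N v).

Definition connected_on (N : nat) (E : nat -> nat -> bool) : Prop :=
  forall u v, in_range N u -> in_range N v ->
    clos_refl_trans nat (fun a b => E a b = true) u v.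

Fixpoint walk (E : nat -> nat -> bool) (l : list nat) : Prop :=
  match l with
  | x :: ((y :: _) as t) => E x y = true /\ walk E t
  | _ => True
  end.

Definition has_cycle (E : nat -> nat -> bool) : Prop :=
  exists (x : nat) (c : list nat),
    NoDup (x :: c) /\ (2 <= length c)%nat /\ walk E (x :: c ++ [x]).

Definition spanning_tree (N : nat) (E : nat -> nat -> bool) : Prop :=
  simple_graph_on N E /\ connected_on N E /\ ~ has_cycle E.

Definition neighbors (N : nat) (E : nat -> nat -> bool) (i : nat) : list nat :=
  filter (E i) (seq 1 N).

Definition degree (N : nat) (E : nat -> nat -> bool) (i : nat) : nat :=
  length (neighbors N E i).

(* minimum of a (nonempty) list of reals; 0 for the empty list (never used
   for spanning trees with N >= 2) *)
Definition min_list (l : list R) : R :=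
  match l with
  | nil => 0
  | x :: xs => fold_right Rmin x xs
  end.

Definition sum_rate (N : nat) (gamma : nat -> R) (E : nat -> nat -> bool) : R :=
  / (2 * (INR N - 1)) *
  fold_right Rplus 0
    (map (fun i => min_list (map (phi gamma i) (neighbors N E i))) (seq 1 N)).

Definition sum_rate_optimal (N : nat) (gamma : nat -> R) (E : nat -> nat -> bool) : Prop :=
  spanning_tree N E /\
  forall E', spanning_tree N E' -> sum_rate N gamma E' <= sum_rate N gamma E.

(* Main.v *)
Require Import Defs.
From Stdlib Require Import Reals List Arith Lra Lia Psatz Permutation Classical FunctionalExtensionality Relations FinFun Btauto.
Import ListNotations.
Open Scope R_scope.

Lemma walk_app (E : nat -> nat -> bool) l1 y l2 :
  walk E (l1 ++ y :: l2) <-> walk E (l1 ++ [y]) /\ walk E (y :: l2).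
Proof.
  induction l1 as [|x l1 IH]; simpl.
  - tauto.
  - destruct l1 as [|z l1]; simpl in *.
    + tauto.
    + rewrite IH. tauto.
Qed.

Lemma walk_impl (E E' : nat -> nat -> bool) l :
  (forall u v, In u l -> In v l -> E' u v = true -> E u v = true) ->
  walk E' l -> walk E l.
Proof.
  induction l as [|x l IH]; simpl; auto.
  destruct l as [|y l]; auto.
  intros H [H1 H2]. split.
  - apply H; simpl; auto.
  - apply IH; [|exact H2]. intros u v Hu Hv. apply H; simpl in *; auto.
Qed.

Lemma walk_map (E : nat -> nat -> bool) (s : nat -> nat) l :
  walk (fun u v => E (s u) (s v)) l -> walk E (map s l).
Proof.
  induction l as [|x l IH]; simpl; auto.
  destruct l as [|y l]; simpl; auto.
  intros [H1 H2]. split; auto. apply IH. exact H2.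
Qed.

Lemma cycle_rotate (E : nat -> nat -> bool) x c y :
  NoDup (x :: c) -> walk E (x :: c ++ [x]) -> In y c ->
  exists c', NoDup (y :: c') /\ length c' = length c /\ walk E (y :: c' ++ [y]) /\
    (forall z, In z (y :: c') <-> In z (x :: c)).
Proof.
  intros Hnd Hw Hy.
  destruct (in_split _ _ Hy) as [c1 [c2 ->]].
  exists (c2 ++ x :: c1).
  assert (Hp : Permutation (x :: c1 ++ y :: c2) (y :: c2 ++ x :: c1)).
  { change (x :: c1 ++ y :: c2) with ((x :: c1) ++ (y :: c2)).
    change (y :: c2 ++ x :: c1) with ((y :: c2) ++ (x :: c1)).
    apply Permutation_app_comm. }
  split; [|split; [|split]].
  - eapply Permutation_NoDup; eauto.
  - rewrite !length_app; simpl; lia.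
  - assert (H1 : walk E ((x :: c1) ++ y :: (c2 ++ [x]))).
    { simpl. rewrite <- app_assoc in Hw. exact Hw. }
    apply walk_app in H1. destruct H1 as [Ha Hb].
    change (y :: (c2 ++ x :: c1) ++ [y]) with (y :: ((c2 ++ x :: c1) ++ [y])).
    rewrite <- app_assoc.
    change (walk E ((y :: c2) ++ x :: (c1 ++ [y]))).
    apply walk_app. split; auto.
  - intro z. split; intro Hz. eapply Permutation_in; [apply Permutation_sym; exact Hp|exact Hz]. eapply Permutation_in; [exact Hp|exact Hz].
Qed.

Lemma cycle_no_leaf (E : nat -> nat -> bool) w a c :
  (forall u v, E u v = E v u) ->
  (forall y, E w y = true -> y = a) ->
  NoDup (w :: c) -> (2 <= length c)%nat -> walk E (w :: c ++ [w]) -> False.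
Proof.
  intros Hs Hl Hnd Hlen Hw.
  destruct c as [|c1 d]; simpl in Hlen; [lia|].
  assert (Hd : d <> []) by (destruct d; simpl in *; [lia|discriminate]).
  destruct (exists_last Hd) as [d' [ck ->]].
  simpl in Hw. destruct Hw as [H1 Hw].
  rewrite <- app_assoc in Hw. simpl in Hw.
  apply (walk_app E (c1 :: d') ck [w]) in Hw. destruct Hw as [_ [H2 _]].
  apply Hl in H1. rewrite Hs in H2. apply Hl in H2. subst.
  inversion Hnd as [|? ? Hn1 Hn2]; subst. inversion Hn2 as [|? ? Hn3 Hn4]; subst. apply Hn3. apply in_or_app. right; simpl; auto.
Qed.

Lemma cycle_through_leaf (E : nat -> nat -> bool) w a :
  (forall u v, E u v = E v u) ->
  (forall y, E w y = true -> y = a) ->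
  forall x c, NoDup (x :: c) -> (2 <= length c)%nat -> walk E (x :: c ++ [x]) ->
  In w (x :: c) -> False.
Proof.
  intros Hs Hl x c Hnd Hlen Hw Hin.
  destruct Hin as [<-|Hin].
  - eapply cycle_no_leaf; eauto.
  - destruct (cycle_rotate E x c w Hnd Hw Hin) as [c' [H1 [H2 [H3 _]]]].
    eapply cycle_no_leaf with (c := c'); eauto. lia.
Qed.

Lemma crt_sym (E : nat -> nat -> bool) u v :
  (forall a b, E a b = E b a) ->
  clos_refl_trans nat (fun a b => E a b = true) u v ->
  clos_refl_trans nat (fun a b => E a b = true) v u.
Proof.
  intros Hs H. induction H.
  - apply rt_step. rewrite Hs; auto.
  - apply rt_refl.
  - eapply rt_trans; eauto.
Qed.

Lemma crt_map (E E' : nat -> nat -> bool) (h : nat -> nat) u v :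
  (forall a b, E a b = true -> h a = h b \/ E' (h a) (h b) = true) ->
  clos_refl_trans nat (fun a b => E a b = true) u v ->
  clos_refl_trans nat (fun a b => E' a b = true) (h u) (h v).
Proof.
  intros Hm H. induction H.
  - destruct (Hm _ _ H) as [->|H']; [apply rt_refl | apply rt_step; auto].
  - apply rt_refl.
  - eapply rt_trans; eauto.
Qed.

Lemma crt_closed (E : nat -> nat -> bool) (P : nat -> Prop) u v :
  (forall a b, P a -> E a b = true -> P b) -> P u ->
  clos_refl_trans nat (fun a b => E a b = true) u v -> P v.
Proof.
  intros Hc Hu H. induction H; eauto.
Qed.

Lemma connected_hub N (E : nat -> nat -> bool) c :
  (forall a b, E a b = E b a) ->
  (forall u, in_range N u -> clos_refl_trans nat (fun a b => E a b = true) u c) ->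
  connected_on N E.
Proof.
  intros Hs H u v Hu Hv. eapply rt_trans. apply H; auto. apply crt_sym; auto.
Qed.

Lemma tree_has_nbr N E v :
  (2 <= N)%nat -> spanning_tree N E -> in_range N v -> exists y, E v y = true.
Proof.
  intros HN [[Hs [Hi Hr]] [Hc _]] Hv.
  assert (Hu : exists u, in_range N u /\ u <> v).
  { unfold in_range in *. destruct (Nat.eqb_spec v 1). exists 2%nat; lia. exists 1%nat; lia. }
  destruct Hu as [u [Hu Huv]].
  specialize (Hc v u Hv Hu). apply clos_rt_rt1n in Hc.
  inversion Hc; subst. congruence. eauto.
Qed.

Lemma fold_min_le x xs : fold_right Rmin x xs <= x /\ forall y, In y xs -> fold_right Rmin x xs <= y.
Proof.
  induction xs as [|z xs IH]; simpl.
  - split; [lra | tauto].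
  - destruct IH as [H1 H2]. split.
    + eapply Rle_trans; [apply Rmin_r | auto].
    + intros y [<-|Hy]. apply Rmin_l. eapply Rle_trans; [apply Rmin_r | auto].
Qed.

Lemma fold_min_in x xs : fold_right Rmin x xs = x \/ In (fold_right Rmin x xs) xs.
Proof.
  induction xs as [|z xs IH]; simpl; auto.
  assert (Hm : Rmin z (fold_right Rmin x xs) = z \/ Rmin z (fold_right Rmin x xs) = fold_right Rmin x xs)
    by (unfold Rmin; destruct Rle_dec; auto).
  destruct Hm as [Hm|Hm]; rewrite Hm.
  - right; left; reflexivity.
  - destruct IH; [left | right; right]; auto.
Qed.

Lemma min_list_le l y : In y l -> min_list l <= y.
Proof.
  destruct l as [|x xs]; simpl; [tauto|].
  intros [H|H]; [rewrite <- H; apply (proj1 (fold_min_le _ _)) | apply (proj2 (fold_min_le _ _)); auto].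
Qed.

Lemma min_list_in l : l <> [] -> In (min_list l) l.
Proof.
  destruct l as [|x xs]; [congruence|]. intros _. simpl.
  destruct (fold_min_in x xs); auto.
Qed.

Definition sumL (f : nat -> R) (l : list nat) : R := fold_right Rplus 0 (map f l).

Lemma sumL_le f g l : (forall v, In v l -> f v <= g v) -> sumL f l <= sumL g l.
Proof.
  induction l as [|x l IH]; unfold sumL; simpl; intros H; [lra|].
  apply Rplus_le_compat; [apply H; simpl; auto | apply IH; intros; apply H; simpl; auto].
Qed.

Lemma sumL_plus f g l : sumL (fun v => f v + g v) l = sumL f l + sumL g l.
Proof. induction l as [|x l IH]; unfold sumL in *; simpl; [lra|]. rewrite IH; lra. Qed.

Definition indc (k v : nat) (c : R) : R := if Nat.eqb v k then c else 0.

Lemma sumL_ind0 k c l : ~ In k l -> sumL (fun v => indc k v c) l = 0.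
Proof.
  induction l as [|x l IH]; unfold sumL in *; simpl; intros H; [reflexivity|].
  unfold indc at 1. destruct (Nat.eqb_spec x k). subst; tauto.
  rewrite IH; [lra|]. tauto.
Qed.

Lemma sumL_ind k c l : NoDup l -> In k l -> sumL (fun v => indc k v c) l = c.
Proof.
  induction l as [|x l IH]; simpl; [tauto|]. intros Hnd Hin. inversion Hnd; subst.
  unfold sumL in *; simpl. unfold indc at 1. destruct (Nat.eqb_spec x k).
  - subst. pose proof (sumL_ind0 k c l H1). unfold sumL in H. rewrite H; lra.
  - destruct Hin as [->|Hin]; [tauto|]. rewrite IH; auto. lra.
Qed.


Definition contr (w a : nat) (E : nat -> nat -> bool) : nat -> nat -> bool :=
  fun u v =>
    if Nat.eqb u w then Nat.eqb v a
    else if Nat.eqb v w then Nat.eqb u a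
    else (negb (Nat.eqb u v) && (E u v || (Nat.eqb u a && E w v) || (Nat.eqb v a && E u w)))%bool.

Ltac eqbs := repeat match goal with
  | |- context [Nat.eqb ?x ?y] => destruct (Nat.eqb_spec x y)
  | H : context [Nat.eqb ?x ?y] |- _ => destruct (Nat.eqb_spec x y)
  end.

Lemma contr_edge w a E u v : contr w a E u v = true ->
  (u = w /\ v = a) \/ (v = w /\ u = a) \/
  (u <> w /\ v <> w /\ u <> v /\ (E u v = true \/ (u = a /\ E w v = true) \/ (v = a /\ E u w = true))).
Proof.
  unfold contr. intros H. eqbs; subst; simpl in H; try discriminate; try tauto;
  repeat match type of H with context [E ?x ?y] => let e := fresh "e" in destruct (E x y) eqn:e end;
  simpl in H; try discriminate; right; right; tauto.
Qed.

Lemma contr_tree N w a E :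
  spanning_tree N E -> E w a = true -> spanning_tree N (contr w a E).
Proof.
  intros [[Hs [Hi Hr]] [Hc Hcy]] Hwa.
  assert (Hwa' : w <> a) by (intro; subst; congruence).
  destruct (Hr _ _ Hwa) as [Hw Ha].
  assert (Hs' : forall u v, contr w a E u v = contr w a E v u).
  { intros u v. unfold contr. eqbs; subst; simpl; auto; try congruence.
    - rewrite (Hs a), (Hs w). destruct (E v a), (E v w); reflexivity.
    - rewrite (Hs a), (Hs w). destruct (E u a), (E u w); reflexivity. }
  split; [split; [|split]|split].
  - exact Hs'.
  - intro u. unfold contr. eqbs; subst; simpl; auto; try congruence.
  - intros u v H. apply contr_edge in H.
    destruct H as [[-> ->]|[[-> ->]|[_ [_ [_ [H|[[-> H]|[-> H]]]]]]]]; auto;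
    pose proof (Hr _ _ H); tauto.
  - apply connected_hub with (c := a); auto.
    intros u Hu.
    destruct (Nat.eq_dec u w) as [->|Huw].
    + apply rt_step. unfold contr. rewrite Nat.eqb_refl. apply Nat.eqb_refl.
    + set (h := fun x => if Nat.eqb x w then a else x).
      assert (Hh : forall x, x <> w -> h x = x) by (intros x Hx; unfold h; eqbs; congruence).
      assert (Hst : forall x y, E x y = true -> h x = h y \/ contr w a E (h x) (h y) = true).
      { intros x y Hxy. unfold h. unfold contr. eqbs; subst; auto; try congruence.
        all: right; simpl; rewrite Hxy; btauto. }
      pose proof (crt_map E (contr w a E) h u a Hst (Hc u a Hu Ha)) as Hm.
      rewrite (Hh u Huw), (Hh a (not_eq_sym Hwa')) in Hm. exact Hm.
  - intros [x [c [Hnd [Hlen Hwk]]]].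
    destruct (classic (In w (x :: c))) as [Hin|Hnin].
    { eapply (cycle_through_leaf (contr w a E) w a); eauto.
      intros y Hy. unfold contr in Hy. rewrite Nat.eqb_refl in Hy. apply Nat.eqb_eq; auto. }
    destruct (classic (In a (x :: c))) as [Hain|Hanin].
    2:{ apply Hcy. exists x, c. split; [auto|split; auto].
        apply walk_impl with (E' := contr w a E); auto.
        intros u v Hu Hv H. apply contr_edge in H.
        assert (In u (x :: c)) by (simpl in Hu |- *; destruct Hu; auto; apply in_app_or in H0; destruct H0 as [|[<-|[]]]; auto).
        assert (In v (x :: c)) by (simpl in Hv |- *; destruct Hv; auto; apply in_app_or in H1; destruct H1 as [|[<-|[]]]; auto).
        destruct H as [[-> _]|[[-> _]|[_ [_ [_ [H|[[-> _]|[-> _]]]]]]]]; tauto. }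
    assert (Hrot : exists c', NoDup (a :: c') /\ (2 <= length c')%nat /\ walk (contr w a E) (a :: c' ++ [a]) /\ ~ In w (a :: c')).
    { destruct Hain as [<-|Hain]. exists c; auto.
      destruct (cycle_rotate _ x c a Hnd Hwk Hain) as [c' [H1 [H2 [H3 H4]]]].
      exists c'. repeat split; auto. lia. rewrite H4; auto. }
    clear x c Hnd Hlen Hwk Hnin Hain.
    destruct Hrot as [c [Hnd [Hlen [Hwk Hnw]]]].
    destruct c as [|c1 d]; simpl in Hlen; [lia|].
    assert (Hd : d <> []) by (destruct d; simpl in *; [lia|discriminate]).
    destruct (exists_last Hd) as [m [ck ->]]. clear Hd.
    simpl in Hwk. destruct Hwk as [H1 Hwk].
    rewrite <- app_assoc in Hwk. simpl in Hwk.
    apply (walk_app _ (c1 :: m) ck [a]) in Hwk. destruct Hwk as [Hin [H2 _]].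
    assert (HinE : walk E ((c1 :: m) ++ [ck])).
    { apply walk_impl with (E' := contr w a E); auto.
      intros u v Hu Hv H. apply contr_edge in H.
      assert (Hu' : u <> a /\ u <> w).
      { split; intro; subst; [inversion Hnd; subst; tauto | apply Hnw; simpl; auto]. }
      assert (Hv' : v <> a /\ v <> w).
      { split; intro; subst; [inversion Hnd; subst; tauto | apply Hnw; simpl; auto]. }
      destruct H as [[-> _]|[[-> _]|[_ [_ [_ [H|[[-> _]|[-> _]]]]]]]]; tauto. }
    assert (Hc1 : c1 <> a /\ c1 <> w).
    { split; intro; subst; [inversion Hnd; subst; simpl in *; tauto | apply Hnw; simpl; auto]. }
    assert (Hck : ck <> a /\ ck <> w).
    { split; intro; subst; [inversion Hnd; subst; apply H3; simpl; right; apply in_or_app; simpl; auto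
                           | apply Hnw; simpl; right; right; apply in_or_app; simpl; auto]. }
    apply contr_edge in H1. apply contr_edge in H2.
    assert (HA : E a c1 = true \/ E w c1 = true).
    { destruct H1 as [[? _]|[[? _]|[_ [_ [_ [H|[[_ H]|[? _]]]]]]]]; try tauto. }
    assert (HB : E ck a = true \/ E ck w = true).
    { destruct H2 as [[? _]|[[? _]|[_ [_ [_ [H|[[? _]|[_ H]]]]]]]]; try tauto. }
    set (L := c1 :: m ++ [ck]).
    assert (HL : walk E L) by exact HinE.
    assert (HndL : NoDup (a :: L)) by exact Hnd.
    assert (HwL : ~ In w (a :: L)) by exact Hnw.
    assert (HlenL : (2 <= length L)%nat) by (unfold L; simpl; rewrite length_app; simpl; lia).
    assert (HLeq : L = (c1 :: m) ++ [ck]) by reflexivity.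
    apply Hcy.
    destruct HA as [HA|HA]; destruct HB as [HB|HB].
    + exists a, L. split; auto. split; auto.
      rewrite HLeq. simpl. split; auto. rewrite <- app_assoc. simpl.
      apply (walk_app E (c1 :: m) ck [a]). split; auto. simpl; auto.
    + exists a, (L ++ [w]). split; [|split].
      * apply Permutation_NoDup with (l := w :: a :: L).
        { change (a :: L ++ [w]) with ((a :: L) ++ [w]). apply Permutation_cons_append. }
        constructor; auto.
      * rewrite length_app; lia.
      * rewrite HLeq. simpl. split; auto. rewrite <- !app_assoc. simpl.
        apply (walk_app E (c1 :: m) ck [w; a]). split; auto. simpl. repeat split; auto.
    + exists a, (w :: L). split; [|split].
      * constructor. intros [H|H]; auto. inversion HndL; auto.
        constructor; auto. intro; apply HwL; simpl; auto. inversion HndL; auto.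
      * simpl; lia.
      * rewrite HLeq. simpl. split. rewrite Hs; auto. split; auto. rewrite <- app_assoc. simpl.
        apply (walk_app E (c1 :: m) ck [a]). split; auto. simpl; auto.
    + exists w, L. split; [|split; auto].
      * constructor; auto. intro; apply HwL; simpl; auto. inversion HndL; auto.
      * rewrite HLeq. simpl. split; auto. rewrite <- app_assoc. simpl.
        apply (walk_app E (c1 :: m) ck [w]). split; auto. simpl; auto.
Qed.


Lemma relabel_tree N (E : nat -> nat -> bool) (s : nat -> nat) :
  (forall v, s (s v) = v) -> (forall v, in_range N v -> in_range N (s v)) ->
  spanning_tree N E -> spanning_tree N (fun u v => E (s u) (s v)).
Proof.
  intros Hss Hsr [[Hs [Hi Hr]] [Hc Hcy]].
  split; [split; [|split]|split].
  - intros; apply Hs.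
  - intros; apply Hi.
  - intros u v H. destruct (Hr _ _ H) as [H1 H2].
    rewrite <- (Hss u), <- (Hss v). split; apply Hsr; auto.
  - intros u v Hu Hv. rewrite <- (Hss u), <- (Hss v).
    apply crt_map with (E := E). intros a b H; right; rewrite !Hss; auto.
    apply Hc; apply Hsr; auto.
  - intros [x [c [Hnd [Hlen Hwk]]]]. apply Hcy.
    exists (s x), (map s c). split; [|split].
    + change (s x :: map s c) with (map s (x :: c)). apply Injective_map_NoDup; auto.
      intros a b H. rewrite <- (Hss a), <- (Hss b), H; auto.
    + rewrite length_map; auto.
    + apply walk_map in Hwk. simpl in Hwk. rewrite map_app in Hwk. exact Hwk.
Qed.

Definition star (N : nat) : nat -> nat -> bool := fun u v =>
  ((Nat.eqb u 1 && Nat.leb 2 v && Nat.leb v N) || (Nat.eqb v 1 && Nat.leb 2 u && Nat.leb u N))%bool.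

Lemma star_tree N : (2 <= N)%nat -> spanning_tree N (star N).
Proof.
  intros HN.
  assert (Hst : forall u v, star N u v = true -> (u = 1%nat /\ 2 <= v <= N \/ v = 1%nat /\ 2 <= u <= N)%nat).
  { intros u v H. unfold star in H.
    apply Bool.orb_true_iff in H. rewrite !Bool.andb_true_iff in H.
    rewrite !Nat.eqb_eq, !Nat.leb_le in H. tauto. }
  assert (Hs : forall u v, star N u v = star N v u) by (intros; unfold star; apply Bool.orb_comm).
  split; [split; [|split]|split].
  - exact Hs.
  - intro u. destruct (star N u u) eqn:E; auto. apply Hst in E. lia.
  - intros u v H. apply Hst in H. unfold in_range. lia.
  - apply connected_hub with (c := 1%nat); auto. intros u Hu.
    destruct (Nat.eq_dec u 1) as [->|Hu1]. apply rt_refl.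
    apply rt_step. unfold star. unfold in_range in Hu.
    apply Bool.orb_true_iff. right. rewrite !Bool.andb_true_iff, Nat.eqb_eq, !Nat.leb_le. lia.
  - intros [x [c [Hnd [Hlen Hwk]]]].
    destruct (classic (In 1%nat (x :: c))) as [Hin|Hnin].
    + assert (Hrot : exists c', NoDup (1%nat :: c') /\ (2 <= length c')%nat /\ walk (star N) (1%nat :: c' ++ [1%nat])).
      { destruct Hin as [Hx|Hin]. subst x. exists c; repeat split; auto.
        destruct (cycle_rotate _ x c 1%nat Hnd Hwk Hin) as [c' [H1 [H2 [H3 H4]]]].
        exists c'. repeat split; auto. lia. }
      destruct Hrot as [[|c1 [|c2 d]] [H1 [H2 H3]]]; simpl in H2; try lia.
      simpl in H3. destruct H3 as [_ [H3 _]]. apply Hst in H3.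
      inversion H1; subst. assert (c1 <> 1%nat /\ c2 <> 1%nat) by (split; intro; subst; apply H4; simpl; auto).
      lia.
    + destruct c as [|c1 d]; simpl in Hlen; [lia|]. simpl in Hwk. destruct Hwk as [H _].
      apply Hst in H. apply Hnin. destruct H as [[-> _]|[-> _]]; simpl; auto.
Qed.


Definition kk (s : R) : R := ln (1 + / s).

Lemma ln_le' a b : 0 < a -> a <= b -> ln a <= ln b.
Proof. intros Ha Hab. destruct (Rle_lt_or_eq_dec _ _ Hab). left; apply ln_increasing; auto. subst; lra. Qed.

Lemma ln2_pos : 0 < ln 2.
Proof. rewrite <- ln_1. apply ln_increasing; lra. Qed.

Lemma kk_anti s t : 0 < s -> s <= t -> kk t <= kk s.
Proof.
  intros Hs Hst. unfold kk. apply ln_le'.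
  assert (0 < / t) by (apply Rinv_0_lt_compat; lra). lra.
  apply Rplus_le_compat_l. apply Rinv_le_contravar; auto.
Qed.

Lemma phi_eq g v u : 0 < g v -> 0 < g u ->
  phi g v u = (ln (g v) + kk (g v + g u)) / ln 2.
Proof.
  intros Hv Hu. unfold phi, log2, kk. f_equal.
  rewrite <- ln_mult; auto.
  - f_equal. field. lra.
  - assert (0 < / (g v + g u)) by (apply Rinv_0_lt_compat; lra). lra.
Qed.

Lemma phi_anti g v x y : 0 < g v -> 0 < g x -> 0 < g y -> g x <= g y ->
  phi g v y <= phi g v x.
Proof.
  intros. rewrite !phi_eq; auto. unfold Rdiv. apply Rmult_le_compat_r.
  left; apply Rinv_0_lt_compat, ln2_pos.
  apply Rplus_le_compat_l. apply kk_anti; lra.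
Qed.

Lemma conv (x w y z : R) : 0 < x -> x <= w -> 0 < y -> y <= z ->
  (1 + / (z + x)) * (1 + / (y + w)) <= (1 + / (z + w)) * (1 + / (y + x)).
Proof.
  intros.
  assert (H3 : (y+x)*(z+w) <= (z+x)*(y+w)) by nra.
  assert (Ha : 0 < z + x) by lra. assert (Hb : 0 < y + w) by lra.
  assert (Hc : 0 < z + w) by lra. assert (Hd : 0 < y + x) by lra.
  replace ((1 + / (z + x)) * (1 + / (y + w))) with (1 + (z+x+y+w+1) / ((z+x)*(y+w))) by (field; lra).
  replace ((1 + / (z + w)) * (1 + / (y + x))) with (1 + (z+x+y+w+1) / ((y+x)*(z+w))) by (field; lra).
  apply Rplus_le_compat_l. unfold Rdiv. apply Rmult_le_compat_l. lra.
  apply Rinv_le_contravar; nra.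
Qed.

Lemma kk_conv (x w y z : R) : 0 < x -> x <= w -> 0 < y -> y <= z ->
  kk (z + x) + kk (y + w) <= kk (z + w) + kk (y + x).
Proof.
  intros. unfold kk.
  assert (forall s, 0 < s -> 0 < 1 + / s) by (intros; assert (0 < / s) by (apply Rinv_0_lt_compat; lra); lra).
  rewrite <- !ln_mult; try (apply H3; lra).
  apply ln_le'. apply Rmult_lt_0_compat; apply H3; lra. apply conv; auto.
Qed.

Lemma K1 g nN nM b : 0 < g b -> g b <= g nM -> g nM <= g nN ->
  phi g nN nM - phi g nN b + (phi g nM nN - phi g nM b) + (phi g b nM - phi g b nN) <= 0.
Proof.
  intros. rewrite !phi_eq; try lra.
  assert (kk (g nN + g nM) <= kk (g nN + g b)) by (apply kk_anti; lra).
  rewrite (Rplus_comm (g nM) (g nN)), (Rplus_comm (g nM) (g b)), (Rplus_comm (g b) (g nN)).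
  pose proof ln2_pos.
  unfold Rdiv. rewrite <- !Rmult_minus_distr_r, <- !Rmult_plus_distr_r.
  assert (0 < / ln 2) by (apply Rinv_0_lt_compat; auto).
  nra.
Qed.

Lemma K2 g nN nM i j : 0 < g i -> g i <= g j -> g j <= g nM -> g nM <= g nN ->
  phi g nN i - phi g nN j + (phi g nM j - phi g nM i) + (phi g i nN - phi g i nM)
  + (phi g j nM - phi g j nN) <= 0.
Proof.
  intros. rewrite !phi_eq; try lra.
  pose proof (kk_conv (g i) (g j) (g nM) (g nN) H H0 ltac:(lra) H2).
  rewrite (Rplus_comm (g i) (g nN)), (Rplus_comm (g i) (g nM)), (Rplus_comm (g j) (g nM)), (Rplus_comm (g j) (g nN)).
  pose proof ln2_pos.
  unfold Rdiv. rewrite <- !Rmult_minus_distr_r, <- !Rmult_plus_distr_r.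
  assert (0 < / ln 2) by (apply Rinv_0_lt_compat; auto).
  nra.
Qed.


Definition vl N g (E : nat -> nat -> bool) v := min_list (map (phi g v) (neighbors N E v)).
Definition SR N g E := sumL (vl N g E) (seq 1 N).

Lemma sum_rate_SR N g E : sum_rate N g E = / (2 * (INR N - 1)) * SR N g E.
Proof. reflexivity. Qed.

Lemma nbr_iff N E v y : In y (neighbors N E v) <-> E v y = true /\ in_range N y.
Proof.
  unfold neighbors, in_range. rewrite filter_In, in_seq. split; intros [H1 H2]; split; auto; lia.
Qed.

Lemma in_seq_range N v : In v (seq 1 N) <-> in_range N v.
Proof. rewrite in_seq. unfold in_range. lia. Qed.

Lemma vl_le N g E v z : E v z = true -> in_range N z -> vl N g E v <= phi g v z.
Proof.
  intros. unfold vl. apply min_list_le. apply in_map. apply nbr_iff; auto.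
Qed.

Lemma vl_attained N g E v : (exists y0, E v y0 = true /\ in_range N y0) ->
  exists y, E v y = true /\ in_range N y /\ vl N g E v = phi g v y.
Proof.
  intros [y0 Hy0]. unfold vl.
  assert (Hne : map (phi g v) (neighbors N E v) <> []).
  { intro H. apply map_eq_nil in H. apply nbr_iff in Hy0. rewrite H in Hy0. auto. }
  apply min_list_in in Hne. apply in_map_iff in Hne. destruct Hne as [y [H1 H2]].
  apply nbr_iff in H2. exists y. destruct H2. split; [auto | split; [auto | symmetry; exact H1]].
Qed.

Lemma vl_ge N g E v c : (exists y0, E v y0 = true /\ in_range N y0) ->
  (forall y, E v y = true -> in_range N y -> c <= phi g v y) -> c <= vl N g E v.
Proof.
  intros H1 H2. destruct (vl_attained N g E v H1) as [y [Ha [Hb ->]]]. auto.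
Qed.

Lemma vl_mono N g E E' v : (exists y0, E' v y0 = true /\ in_range N y0) ->
  (forall y, E' v y = true -> in_range N y ->
     exists x, E v x = true /\ in_range N x /\ phi g v x <= phi g v y) ->
  vl N g E v <= vl N g E' v.
Proof.
  intros H1 H2. destruct (vl_attained N g E' v H1) as [y [Ha [Hb ->]]].
  destruct (H2 y Ha Hb) as [x [Hx1 [Hx2 Hx3]]].
  eapply Rle_trans; [apply vl_le; eauto | auto].
Qed.

Lemma tree_nbr_range N E v : (2 <= N)%nat -> spanning_tree N E -> in_range N v ->
  exists y0, E v y0 = true /\ in_range N y0.
Proof.
  intros HN HT Hv. destruct (tree_has_nbr N E v HN HT Hv) as [y Hy].
  exists y. split; auto. destruct HT as [[_ [_ Hr]] _]. apply (Hr _ _ Hy).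
Qed.

Lemma contr_mono N g E w a :
  (2 <= N)%nat -> spanning_tree N E -> E w a = true ->
  (forall i, in_range N i -> 0 < g i) ->
  (forall x, E w x = true -> g x <= g w) ->
  SR N g E <= SR N g (contr w a E).
Proof.
  intros HN HT Hwa Hpos Hmax.
  pose proof (contr_tree N w a E HT Hwa) as HT'.
  destruct HT as [[Hs [Hi Hr]] _].
  assert (Hr' := proj2 (proj2 (proj1 HT'))).
  apply sumL_le. intros v Hv. apply in_seq_range in Hv.
  apply vl_mono. apply tree_nbr_range; auto.
  intros y Hy Hyr. pose proof (Hr' _ _ Hy) as [Hvr _].
  apply contr_edge in Hy.
  destruct Hy as [[-> ->]|[[-> ->]|[_ [_ [_ [H|[[-> H]|[-> H]]]]]]]].
  - exists a. split; auto. split; auto. lra.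
  - exists w. rewrite Hs. split; auto. split. apply (Hr _ _ Hwa). lra.
  - exists y. split; auto. split; auto. lra.
  - exists w. rewrite Hs. split; auto. split. apply (Hr _ _ Hwa).
    pose proof (Hr _ _ Hwa). pose proof (Hr _ _ H).
    apply phi_anti; try apply Hpos; try tauto. apply Hmax; auto.
  - exists w. split; auto. pose proof (Hr _ _ Hwa). pose proof (Hr _ _ H). split. tauto.
    apply phi_anti; try apply Hpos; try tauto. apply Hmax; auto.
Qed.


Fixpoint allrels (ps : list (nat * nat)) : list (nat -> nat -> bool) :=
  match ps with
  | [] => [fun _ _ => false]
  | p :: ps' =>
      allrels ps' ++ map (fun f => fun u v =>
        if (Nat.eqb u (fst p) && Nat.eqb v (snd p))%bool then true else f u v) (allrels ps')
  end.

Lemma allrels_complete ps : forall E : nat -> nat -> bool,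
  (forall u v, E u v = true -> In (u, v) ps) ->
  exists F, In F (allrels ps) /\ forall u v, F u v = E u v.
Proof.
  induction ps as [|[p1 p2] ps IH]; intros E HE.
  - exists (fun _ _ => false). split; [simpl; auto|].
    intros u v. destruct (E u v) eqn:H; auto. apply HE in H. destruct H.
  - set (E0 := fun u v => if (Nat.eqb u p1 && Nat.eqb v p2)%bool then false else E u v).
    destruct (IH E0) as [F0 [HF0 HF0e]].
    { intros u v H. unfold E0 in H.
      destruct (Nat.eqb_spec u p1), (Nat.eqb_spec v p2); simpl in H; try discriminate;
      apply HE in H; destruct H as [H|H]; auto; inversion H; subst; tauto. }
    destruct (E p1 p2) eqn:Hp.
    + exists (fun u v => if (Nat.eqb u p1 && Nat.eqb v p2)%bool then true else F0 u v).
      split. simpl. apply in_or_app. right. apply in_map with (f := fun f => fun u v =>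
        if (Nat.eqb u p1 && Nat.eqb v p2)%bool then true else f u v). auto.
      intros u v. rewrite HF0e. unfold E0.
      destruct (Nat.eqb_spec u p1), (Nat.eqb_spec v p2); simpl; subst; auto.
    + exists F0. split. simpl. apply in_or_app; auto.
      intros u v. rewrite HF0e. unfold E0.
      destruct (Nat.eqb_spec u p1), (Nat.eqb_spec v p2); simpl; subst; auto.
Qed.

Lemma opt_list (L : list (nat -> nat -> bool)) (P : (nat -> nat -> bool) -> Prop) (f : (nat -> nat -> bool) -> R) :
  (exists E, In E L /\ P E) ->
  exists E, In E L /\ P E /\ forall E', In E' L -> P E' -> f E' <= f E.
Proof.
  induction L as [|E0 L IH]; intros [E [HE HP]]; [destruct HE|].
  destruct (classic (exists E, In E L /\ P E)) as [Hex|Hnex].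
  - destruct (IH Hex) as [Em [H1 [H2 H3]]].
    destruct (classic (P E0 /\ f Em < f E0)) as [[HP0 Hlt]|Hn].
    + exists E0. split; [simpl; auto|]. split; auto.
      intros E' HE' HPE'; destruct HE' as [Heq|HE']; [subst; lra|]. specialize (H3 E' HE' HPE'). lra.
    + exists Em. split; [simpl; auto|]. split; auto.
      intros E' HE' HPE'; destruct HE' as [Heq|HE']; [subst; match goal with |- f ?X <= _ => destruct (Rle_dec (f X) (f Em)); [auto|exfalso; apply Hn; split; auto; lra] end|]. destruct (Rle_dec (f E') (f Em)); auto.
  - assert (P E0).
    { destruct HE as [<-|HE]; auto. exfalso; apply Hnex; eauto. }
    exists E0. split; [simpl; auto|]. split; auto.
    intros E' HE' HPE'; destruct HE' as [Heq|HE']; [subst; lra|]. exfalso; apply Hnex; eauto.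
Qed.

Lemma ext_eq (F E : nat -> nat -> bool) : (forall u v, F u v = E u v) -> F = E.
Proof. intros H. apply functional_extensionality; intro u. apply functional_extensionality; intro v. auto. Qed.

Lemma opt_exists N g : (2 <= N)%nat ->
  exists E, spanning_tree N E /\ forall E', spanning_tree N E' -> SR N g E' <= SR N g E.
Proof.
  intros HN.
  set (ps := list_prod (seq 1 N) (seq 1 N)).
  assert (Hsupp : forall E, spanning_tree N E -> forall u v, E u v = true -> In (u, v) ps).
  { intros E [[_ [_ Hr]] _] u v H. destruct (Hr _ _ H). apply in_prod; apply in_seq_range; auto. }
  destruct (opt_list (allrels ps) (spanning_tree N) (SR N g)) as [Em [H1 [H2 H3]]].
  { destruct (allrels_complete ps (star N) (Hsupp _ (star_tree N HN))) as [F [HF HFe]].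
    exists F. split; auto. rewrite (ext_eq F (star N) HFe). apply star_tree; auto. }
  exists Em. split; auto. intros E' HE'.
  destruct (allrels_complete ps E' (Hsupp _ HE')) as [F [HF HFe]].
  rewrite <- (ext_eq F E' HFe). apply H3; auto. rewrite (ext_eq F E' HFe). auto.
Qed.


Ltac eqbg := repeat match goal with |- context [Nat.eqb ?x ?y] => destruct (Nat.eqb_spec x y) end.

Lemma count_eqb c s n : length (filter (fun x => Nat.eqb x c) (seq s n)) = (if (Nat.leb s c && Nat.ltb c (s + n))%bool then 1 else 0)%nat.
Proof.
  revert s. induction n as [|n IH]; intros s; simpl.
  - destruct (Nat.leb_spec s c), (Nat.ltb_spec c (s + 0)); simpl; auto; lia.
  - destruct (Nat.eqb_spec s c); simpl; rewrite IH.
    + subst. destruct (Nat.leb_spec (S c) c), (Nat.ltb_spec c (S (c + n))), (Nat.leb_spec c c), (Nat.ltb_spec c (c + S n)); simpl; auto; lia.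
    + destruct (Nat.leb_spec (S s) c), (Nat.ltb_spec c (S s + n)), (Nat.leb_spec s c), (Nat.ltb_spec c (s + S n)); simpl; auto; lia.
Qed.

Lemma degree_one N E v c : in_range N c -> (forall x, E v x = true <-> x = c) -> degree N E v = 1%nat.
Proof.
  intros Hc H. unfold degree, neighbors.
  rewrite (filter_ext (E v) (fun x => Nat.eqb x c)).
  - rewrite count_eqb. unfold in_range in Hc.
    destruct (Nat.leb_spec 1 c), (Nat.ltb_spec c (1 + N)); simpl; auto; lia.
  - intro x. destruct (E v x) eqn:He; symmetry.
    + apply Nat.eqb_eq, H; auto.
    + apply Nat.eqb_neq. intro Hx. apply H in Hx. congruence.
Qed.

Lemma sum_corr N g E E' (c : nat -> R) C :
  (forall v, in_range N v -> vl N g E v <= vl N g E' v + c v) ->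
  sumL c (seq 1 N) = C -> C <= 0 -> SR N g E <= SR N g E'.
Proof.
  intros H HC HC0. unfold SR.
  eapply Rle_trans. apply sumL_le with (g := fun v => vl N g E' v + c v).
  intros v Hv. apply H, in_seq_range; auto.
  rewrite sumL_plus, HC. lra.
Qed.

Section Main.
Variable N : nat.
Variable g : nat -> R.
Hypothesis HN : (3 <= N)%nat.
Hypothesis Hpos : forall i, (1 <= i <= N)%nat -> 0 < g i.
Hypothesis Hmono : forall i j, (1 <= i)%nat -> (i <= j)%nat -> (j <= N)%nat -> g i <= g j.

Lemma gpos i : in_range N i -> 0 < g i.
Proof. intros; apply Hpos; auto. Qed.
Lemma gN x : in_range N x -> g x <= g N.
Proof. unfold in_range; intros; apply Hmono; lia. Qed.
Lemma gM x : in_range N x -> x <> N -> g x <= g (N - 1)%nat.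
Proof. unfold in_range; intros; apply Hmono; lia. Qed.
Lemma rN : in_range N N. Proof. unfold in_range; lia. Qed.
Lemma rM : in_range N (N - 1)%nat. Proof. unfold in_range; lia. Qed.

Lemma stepC E i j :
  spanning_tree N E -> in_range N i -> in_range N j -> i <> (N - 1)%nat ->
  (forall x, E N x = true <-> x = i) -> (forall x, E (N - 1)%nat x = true <-> x = j) ->
  exists E', spanning_tree N E' /\ SR N g E <= SR N g E' /\
    exists i' j', in_range N i' /\ in_range N j' /\
    (forall x, E' N x = true <-> x = i') /\ (forall x, E' (N - 1)%nat x = true <-> x = j') /\ g j' <= g i'.
Proof.
  intros HT Hi Hj HiM HEN HEM.
  destruct (Rle_dec (g j) (g i)) as [Hle|Hlt].
  { exists E. split; auto. split; [lra|]. exists i, j. auto. }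
  apply Rnot_le_lt in Hlt.
  pose proof HT as [[Hs [Hirr Hr]] _].
  assert (HiN : i <> N) by (intro; subst; assert (E N N = true) by (apply HEN; auto); rewrite Hirr in *; discriminate).
  assert (HjM : j <> (N - 1)%nat) by (intro; subst; assert (E (N-1)%nat (N-1)%nat = true) by (apply HEM; auto); rewrite Hirr in *; discriminate).
  assert (HjN : j <> N).
  { intro; subst. assert (E (N-1)%nat N = true) by (apply HEM; auto).
    rewrite Hs in H. apply HEN in H. lia. }
  assert (Hij : i <> j) by (intro; subst; lra).
  set (M := (N - 1)%nat) in *.
  assert (HMN : M <> N) by (unfold M; lia).
  set (s := fun v => if Nat.eqb v N then M else if Nat.eqb v M then N else v).
  assert (Hss : forall v, s (s v) = v).
  { intro v. unfold s. destruct (Nat.eqb_spec v N) as [->|HvN].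
    - rewrite (proj2 (Nat.eqb_neq M N) HMN), Nat.eqb_refl. reflexivity.
    - destruct (Nat.eqb_spec v M) as [->|HvM].
      + rewrite Nat.eqb_refl. reflexivity.
      + rewrite (proj2 (Nat.eqb_neq v N) HvN), (proj2 (Nat.eqb_neq v M) HvM). reflexivity. }
  assert (Hsr : forall v, in_range N v -> in_range N (s v)).
  { intros v Hv. unfold s. destruct (Nat.eqb_spec v N); [apply rM|]. destruct (Nat.eqb_spec v M); [apply rN|auto]. }
  assert (Hsid : forall v, v <> N -> v <> M -> s v = v).
  { intros v H1 H2. unfold s. rewrite (proj2 (Nat.eqb_neq v N) H1), (proj2 (Nat.eqb_neq v M) H2); auto. }
  assert (HsN : s N = M) by (unfold s; rewrite Nat.eqb_refl; auto).
  assert (HsM : s M = N) by (unfold s; rewrite (proj2 (Nat.eqb_neq M N) HMN), Nat.eqb_refl; auto).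
  set (E' := fun u v => E (s u) (s v)).
  assert (HT' : spanning_tree N E') by exact (relabel_tree N E s Hss Hsr HT).
  assert (HE'N : forall x, E' N x = true <-> x = j).
  { intro x. unfold E'. rewrite HsN, HEM. split; intro H.
    - rewrite <- (Hss x), H. apply Hsid; auto.
    - rewrite H. apply Hsid; auto. }
  assert (HE'M : forall x, E' M x = true <-> x = i).
  { intro x. unfold E'. rewrite HsM, HEN. split; intro H.
    - rewrite <- (Hss x), H. apply Hsid; auto.
    - rewrite H. apply Hsid; auto. }
  exists E'. split; auto. split.
  2:{ exists j, i. split; [auto|split; [auto|split; [exact HE'N | split; [exact HE'M | lra]]]]. }
  assert (Hnbr' : forall v, in_range N v -> exists y0, E' v y0 = true /\ in_range N y0)
    by (intros; apply tree_nbr_range; auto; lia).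
  assert (Hr' := proj2 (proj2 (proj1 HT'))).
  apply sum_corr with
    (c := fun v => indc N v (phi g N i - phi g N j) + indc M v (phi g M j - phi g M i)
                   + indc i v (phi g i N - phi g i M) + indc j v (phi g j M - phi g j N))
    (C := phi g N i - phi g N j + (phi g M j - phi g M i) + (phi g i N - phi g i M)
          + (phi g j M - phi g j N)).
  - intros v Hv.
    destruct (Nat.eq_dec v N) as [->|HvN].
    { assert (vl N g E N <= phi g N i) by (apply vl_le; auto; apply HEN; auto).
      assert (phi g N j <= vl N g E' N).
      { apply vl_ge; auto. intros y Hy _. apply HE'N in Hy. rewrite Hy; lra. }
      unfold indc; eqbg; try (exfalso; congruence); lra. }
    destruct (Nat.eq_dec v M) as [->|HvM].
    { assert (vl N g E M <= phi g M j) by (apply vl_le; auto; apply HEM; auto).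
      assert (phi g M i <= vl N g E' M).
      { apply vl_ge; auto. intros y Hy _. apply HE'M in Hy. rewrite Hy; lra. }
      unfold indc; eqbg; try (exfalso; congruence); lra. }
    destruct (Nat.eq_dec v i) as [->|Hvi].
    { assert (vl N g E i <= phi g i N) by (apply vl_le; [rewrite Hs; apply HEN; auto | apply rN]).
      assert (phi g i M <= vl N g E' i).
      { apply vl_ge; auto. intros y Hy Hyr. apply phi_anti; try apply gpos; auto. apply rM.
        apply gM; auto. intro Heq; rewrite Heq in Hy. unfold E' in Hy. rewrite HsN, (Hsid i) in Hy; auto.
        rewrite Hs in Hy. apply HEM in Hy. congruence. }
      unfold indc; eqbg; try (exfalso; congruence); lra. }
    destruct (Nat.eq_dec v j) as [->|Hvj].
    { assert (vl N g E j <= phi g j M) by (apply vl_le; [rewrite Hs; apply HEM; auto | apply rM]).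
      assert (phi g j N <= vl N g E' j).
      { apply vl_ge; auto. intros y Hy Hyr. apply phi_anti; try apply gpos; auto. apply rN.
        apply gN; auto. }
      unfold indc; eqbg; try (exfalso; congruence); lra. }
    assert (Hv' : vl N g E' v = vl N g E v).
    { unfold vl, neighbors. f_equal. f_equal. apply filter_ext. intro x. unfold E'.
      rewrite (Hsid v); auto.
      destruct (Nat.eq_dec x N) as [->|HxN]; [|destruct (Nat.eq_dec x M) as [->|HxM]].
      - rewrite HsN. destruct (E v M) eqn:H1; destruct (E v N) eqn:H2; auto; exfalso;
        first [rewrite Hs in H1; apply HEM in H1; congruence | rewrite Hs in H2; apply HEN in H2; congruence].
      - rewrite HsM. destruct (E v M) eqn:H1; destruct (E v N) eqn:H2; auto; exfalso;
        first [rewrite Hs in H1; apply HEM in H1; congruence | rewrite Hs in H2; apply HEN in H2; congruence].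
      - rewrite Hsid; auto. }
    rewrite Hv'. unfold indc; eqbg; try (exfalso; congruence); lra.
  - rewrite !sumL_plus, !sumL_ind; try apply seq_NoDup; try (apply in_seq_range; first [apply rN | apply rM | auto]); try reflexivity.
  - apply K2; try apply gpos; auto. lra. apply gM; auto. apply gN, rM.
Qed.

Lemma stepB2 E :
  spanning_tree N E -> (forall x, E N x = true <-> x = (N - 1)%nat) ->
  exists E', spanning_tree N E' /\ SR N g E <= SR N g E' /\
    exists b, in_range N b /\ (forall x, E' N x = true <-> x = b) /\ (forall x, E' (N - 1)%nat x = true <-> x = b).
Proof.
  intros HT HEN.
  pose proof HT as [[Hs [Hirr Hr]] [Hc _]].
  set (M := (N - 1)%nat) in *.
  assert (HMN : M <> N) by (unfold M; lia).
  assert (HNM : E N M = true) by (apply HEN; auto).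
  destruct (classic (exists b, E M b = true /\ b <> N)) as [[b [Hb HbN]]|Hno].
  2:{ exfalso.
      assert (H1 : in_range N 1) by (unfold in_range; lia).
      pose proof (Hc M 1%nat rM H1) as Hp.
      assert (Hcl : 1%nat = N \/ 1%nat = M).
      { apply (crt_closed E (fun x => x = N \/ x = M) M 1%nat); auto.
        intros x y [ Hx | Hx ] Hxy; rewrite Hx in Hxy; clear Hx.
        - right. apply HEN; auto.
        - left. destruct (Nat.eq_dec y N); auto. exfalso; apply Hno; eauto. }
      unfold M in Hcl. lia. }
  assert (Hbr : in_range N b) by (apply (Hr _ _ Hb)).
  assert (HbM : b <> M) by (intro Heq; rewrite Heq in Hb; rewrite Hirr in Hb; discriminate).
  set (E2 := contr M b E).
  assert (HT2 : spanning_tree N E2) by exact (contr_tree N M b E HT Hb).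
  assert (HE2M : forall x, E2 M x = true <-> x = b).
  { intro x. unfold E2, contr. rewrite Nat.eqb_refl. apply Nat.eqb_eq. }
  assert (HE2N : forall x, E2 N x = true <-> x = b).
  { intro x. split; intro H.
    - apply contr_edge in H.
      destruct H as [[? _]|[[_ ?]|[_ [Hxw [_ [H|[[? _]|[? _]]]]]]]]; try congruence; auto.
      apply HEN in H. congruence.
    - rewrite H. unfold E2, contr.
      rewrite (proj2 (Nat.eqb_neq N M) (not_eq_sym HMN)), (proj2 (Nat.eqb_neq b M) HbM),
              (proj2 (Nat.eqb_neq N b) (not_eq_sym HbN)), Nat.eqb_refl, HNM.
      simpl. destruct (E N b); reflexivity. }
  exists E2. split; auto. split.
  2:{ exists b. auto. }
  assert (Hnbr' : forall v, in_range N v -> exists y0, E2 v y0 = true /\ in_range N y0)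
    by (intros; apply tree_nbr_range; auto; lia).
  assert (Hr2 := proj2 (proj2 (proj1 HT2))).
  assert (HgbM : g b <= g M) by (apply gM; auto).
  apply sum_corr with
    (c := fun v => indc N v (phi g N M - phi g N b) + indc M v (phi g M N - phi g M b)
                   + indc b v (phi g b M - phi g b N))
    (C := phi g N M - phi g N b + (phi g M N - phi g M b) + (phi g b M - phi g b N)).
  - intros v Hv.
    destruct (Nat.eq_dec v N) as [->|HvN].
    { assert (vl N g E N <= phi g N M) by (apply vl_le; auto; apply rM).
      assert (phi g N b <= vl N g E2 N).
      { apply vl_ge; auto. intros y Hy _. apply HE2N in Hy. rewrite Hy; lra. }
      unfold indc; eqbg; try (exfalso; congruence); lra. }
    destruct (Nat.eq_dec v M) as [->|HvM].
    { assert (vl N g E M <= phi g M N) by (apply vl_le; [rewrite Hs; auto | apply rN]).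
      assert (phi g M b <= vl N g E2 M).
      { apply vl_ge; auto. intros y Hy _. apply HE2M in Hy. rewrite Hy; lra. }
      unfold indc; eqbg; try (exfalso; congruence); lra. }
    destruct (Nat.eq_dec v b) as [->|Hvb].
    { assert (vl N g E b <= phi g b M) by (apply vl_le; [rewrite Hs; auto | apply rM]).
      assert (phi g b N <= vl N g E2 b).
      { apply vl_ge; auto. intros y Hy Hyr. apply phi_anti; try apply gpos; auto. apply rN.
        apply gN; auto. }
      unfold indc; eqbg; try (exfalso; congruence); lra. }
    assert (vl N g E v <= vl N g E2 v).
    { apply vl_mono; auto. intros y Hy Hyr.
      apply contr_edge in Hy.
      destruct Hy as [[? _]|[[_ ?]|[_ [_ [_ [H|[[? _]|[Hyb H]]]]]]]]; try congruence.
      - exists y. split; auto. split; auto. lra.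
      - exists M. split; auto. split. apply rM. rewrite Hyb.
        apply phi_anti; try apply gpos; auto. apply rM. }
    unfold indc; eqbg; try (exfalso; congruence); lra.
  - rewrite !sumL_plus, !sumL_ind; try apply seq_NoDup; try (apply in_seq_range; first [apply rN | apply rM | auto]); try reflexivity.
  - apply K1; try apply gpos; auto. apply gN, rM.
Qed.

Lemma stepB1 E a :
  spanning_tree N E -> in_range N a -> a <> (N - 1)%nat -> (forall x, E N x = true <-> x = a) ->
  exists E', spanning_tree N E' /\ SR N g E <= SR N g E' /\
    exists b, in_range N b /\ (forall x, E' N x = true <-> x = a) /\ (forall x, E' (N - 1)%nat x = true <-> x = b).
Proof.
  intros HT Ha HaM HEN.
  pose proof HT as [[Hs [Hirr Hr]] _].
  set (M := (N - 1)%nat) in *.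
  assert (HMN : M <> N) by (unfold M; lia).
  assert (HaN : a <> N) by (intro Heq; assert (E N N = true) by (apply HEN; auto); congruence).
  assert (HMx : forall x, E M x = true -> x <> N).
  { intros x Hx Heq. rewrite Heq, Hs in Hx. apply HEN in Hx. congruence. }
  destruct (tree_nbr_range N E M ltac:(lia) HT rM) as [b [Hb Hbr]].
  assert (HbN : b <> N) by (apply HMx; auto).
  assert (HbM : b <> M) by (intro Heq; rewrite Heq in Hb; rewrite Hirr in Hb; discriminate).
  exists (contr M b E). split; [apply contr_tree; auto|]. split.
  { apply contr_mono; [lia | exact HT | exact Hb | intros; apply gpos; auto |].
    intros x Hx. apply gM; [apply (Hr _ _ Hx) | apply HMx; auto]. }
  exists b. split; auto. split.
  - intro x. split; intro H.
    + apply contr_edge in H.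
      destruct H as [[? _]|[[_ ?]|[_ [_ [_ [H|[[? _]|[? H]]]]]]]]; try congruence.
      * apply HEN; auto.
      * apply HEN in H. congruence.
    + rewrite H. unfold contr.
      rewrite (proj2 (Nat.eqb_neq N M) (not_eq_sym HMN)), (proj2 (Nat.eqb_neq a M) HaM),
              (proj2 (Nat.eqb_neq N a) (not_eq_sym HaN)), (proj2 (HEN a) eq_refl).
      reflexivity.
  - intro x. unfold contr. rewrite Nat.eqb_refl. apply Nat.eqb_eq.
Qed.

End Main.


Theorem lemma4 (N : nat) (gamma : nat -> R)
  (HN : (3 <= N)%nat)
  (Hpos : forall i, (1 <= i <= N)%nat -> 0 < gamma i)
  (Hmono : forall i j, (1 <= i)%nat -> (i <= j)%nat -> (j <= N)%nat -> gamma i <= gamma j) :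
  exists E : nat -> nat -> bool,
    sum_rate_optimal N gamma E /\
    degree N E N = 1%nat /\
    degree N E (N - 1) = 1%nat /\
    (forall i j, E N i = true -> E (N - 1)%nat j = true -> gamma j <= gamma i).
Proof.
  destruct (opt_exists N gamma ltac:(lia)) as [E0 [HT0 Hopt]].
  assert (Fin : forall E i j, spanning_tree N E -> SR N gamma E0 <= SR N gamma E ->
            in_range N i -> in_range N j -> (forall x, E N x = true <-> x = i) ->
            (forall x, E (N - 1)%nat x = true <-> x = j) -> gamma j <= gamma i ->
            exists E : nat -> nat -> bool,
              sum_rate_optimal N gamma E /\ degree N E N = 1%nat /\ degree N E (N - 1) = 1%nat /\
              (forall i j, E N i = true -> E (N - 1)%nat j = true -> gamma j <= gamma i)).
  { intros E i j HT HSR Hi Hj HEN HEM Hg. exists E. split; [split; auto|].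
    - intros E' HE'. rewrite !sum_rate_SR. apply Rmult_le_compat_l.
      + left. apply Rinv_0_lt_compat.
        assert (INR N >= 3) by (replace 3 with (INR 3) by (simpl; lra); apply Rle_ge, le_INR; lia).
        lra.
      + eapply Rle_trans; [apply Hopt; auto | auto].
    - split; [apply (degree_one N E N i); auto|].
      split; [apply (degree_one N E (N - 1) j); auto|].
      intros i' j' H1 H2. apply HEN in H1. apply HEM in H2. rewrite H1, H2. auto. }
  assert (rN : in_range N N) by (unfold in_range; lia).
  destruct (tree_nbr_range N E0 N ltac:(lia) HT0 rN) as [a [Ha Har]].
  pose proof (contr_tree N N a E0 HT0 Ha) as HT1.
  assert (HSR1 : SR N gamma E0 <= SR N gamma (contr N a E0)).
  { apply contr_mono; auto. lia. intros x Hx. apply Hmono; destruct (proj2 (proj2 (proj1 HT0)) _ _ Hx) as [_ H]; unfold in_range in H; lia. }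
  assert (HE1N : forall x, contr N a E0 N x = true <-> x = a).
  { intro x. unfold contr. rewrite Nat.eqb_refl. apply Nat.eqb_eq. }
  destruct (Nat.eq_dec a (N - 1)%nat) as [HaM|HaM].
  - assert (HE1N' : forall x, contr N a E0 N x = true <-> x = (N - 1)%nat)
      by (intro x; rewrite (HE1N x), HaM; tauto).
    destruct (stepB2 N gamma HN Hpos Hmono _ HT1 HE1N') as [E2 [HT2 [HSR2 [b [Hb [H1 H2]]]]]].
    apply (Fin E2 b b); auto. lra. lra.
  - destruct (stepB1 N gamma HN Hpos Hmono _ a HT1 Har HaM HE1N) as [E2 [HT2 [HSR2 [b [Hb [H1 H2]]]]]].
    destruct (stepC N gamma HN Hpos Hmono E2 a b HT2 Har Hb HaM H1 H2) as [E3 [HT3 [HSR3 [i [j [Hi [Hj [H3 [H4 H5]]]]]]]]].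
    apply (Fin E3 i j); auto. lra.
Qed.
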